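(* Let $s\ge1$, $M=(p^s-1)/2$, and $1\le l\le g$. Put $\delta_l=(2g+1)M-lp^s$. With respect to the lexicographic order of monomials with $z_1>z_2>\dots>z_n$, the leading term of $I^{[lp^s-1]}_{p^s}(z)$ is $$(-1)^{\delta_l}\binom{M}{l}\Big(0,\dots,0,\tfrac{l}{M},1,\dots,1\Big)\,z_1^M\cdots z_{2g-2l}^M\,z_{2g-2l+1}^{M-l},$$ where in the vector the entry $0$ is repeated $2g-2l$ times, followed by $l/M$ (in position $2g-2l+1$), followed by $2l$ entries equal to $1$. (The vector $\binom Ml(0,\dots,0,l/M,1,\dots,1)$ has integer entries.)
   Context: Let $p$ be an odd prime, $g\ge1$, $n=2g+1$, with $p>n$; $z=(z_1,\dots,z_n)$. For a positive integer $r$ put $M_r=(p^r-1)/2$, $\Phi_{p^r}(x,z)=\prod_{i=1}^n(x-z_i)^{M_r}$, expand $\Big(\frac{\Phi_{p^r}}{x-z_1},\dots,\frac{\Phi_{p^r}}{x-z_n}\Big)=\sum_iP^i_{p^r}(z)x^i$ with $P^i_{p^r}(z)\in\mathbb Z[z]^n$, and set $I^{[lp^r-1]}_{p^r}(z)=P^{lp^r-1}_{p^r}(z)$. Leading term: for a nonzero (vector) polynomial $f(z)=\sum_d a_dz_1^{d_1}\cdots z_n^{d_n}$ (with $a_d$ scalars or vectors), its leading term is the nonzero summand $a_dz^d$ whose monomial $z^d$ is largest in the lexicographic order with $z_1>\dots>z_n$. *)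

(* Defs.v *)
From HB Require Import structures.
From mathcomp Require Import all_boot all_order all_algebra.
From mathcomp Require Import multinomials.mpoly.
Set Implicit Arguments. Unset Strict Implicit. Unset Printing Implicit Defensive.
Import Order.TTheory GRing.Theory Num.Theory.
Local Open Scope ring_scope.

Definition Mr (p r : nat) : nat := ((p ^ r).-1 %/ 2)%N.

(* Phi_{p^r}(x,z)/(x - z_k) = (x - z_k)^(M_r - 1) * prod_{j <> k} (x - z_j)^(M_r),
   as a polynomial in x with coefficients in Z[z_1,...,z_n]. *)
Definition Phi_div (n p r : nat) (k : 'I_n) : {poly {mpoly int[n]}} :=
  ('X - ('X_k)%:P) ^+ (Mr p r).-1 *
  \prod_(j < n | j != k) ('X - ('X_j)%:P) ^+ Mr p r.

Definition Pvec (n p r i : nat) : 'I_n -> {mpoly int[n]} :=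
  fun k => (@Phi_div n p r k)`_i.

Definition Ivec (n p r l : nat) : 'I_n -> {mpoly int[n]} :=
  @Pvec n p r (l * p ^ r).-1.

Definition lex_lt (n : nat) (m1 m2 : 'X_{1..n}) : Prop :=
  exists i : 'I_n, (forall j : 'I_n, (j < i)%N -> m1 j = m2 j) /\ (m1 i < m2 i)%N.

Definition is_leading_term (n : nat) (f : 'I_n -> {mpoly int[n]})
    (c : 'I_n -> rat) (d : 'X_{1..n}) : Prop :=
  (exists k, c k != 0) /\
  (forall k, ((f k)@_d)%:~R = c k) /\
  (forall (m : 'X_{1..n}) k, lex_lt d m -> (f k)@_m = 0).

(* Main.v *)
Require Import Defs.
From HB Require Import structures.
From mathcomp Require Import all_boot all_order all_algebra.
From mathcomp Require Import multinomials.mpoly.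
From mathcomp Require Import ring zify.
From Stdlib Require Import Lia.
Import Order.TTheory GRing.Theory Num.Theory.
Local Open Scope ring_scope.

Lemma Xsub_expE (R : comNzRingType) (c : R) (e E : nat) : (e <= E)%N ->
  ('X - c%:P) ^+ e = \sum_(a < E.+1) ((-1) ^+ a * ('C(e, a))%:R * c ^+ a)%:P * 'X^(e - a).
Proof.
move=> leE; rewrite exprDn.
rewrite (big_ord_widen E.+1 (fun i => 'X ^+ (e - i) * (- c%:P) ^+ i *+ 'C(e, i))) // big_mkcond /=.
apply: eq_bigr => a _; case: ifP => ha.
  rewrite rmorphM rmorphM /= !rmorphXn /= rmorphN1 polyC_natr -mulr_natr.
  by rewrite -[- c%:P]mulN1r exprMn; ring.
by rewrite bin_small ?mulr0 ?mul0r ?rmorph0 ?mul0r // ltnNge -ltnS ha.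
Qed.

Lemma sumU n (f : 'I_n -> nat) : (\sum_j U_(j) *+ f j)%MM = [multinom f j | j < n].
Proof. by rewrite [in RHS](multinomUE_id [multinom f j | j < n]); apply: eq_bigr => j _; rewrite mnmE. Qed.

Lemma term_coef (R : comNzRingType) n (e : 'I_n -> nat) E (f : {ffun 'I_n -> 'I_E.+1}) i m :
  ((\prod_(j < n) (((-1) ^+ f j * ('C(e j, f j))%:R * ('X_j : {mpoly R[n]}) ^+ f j)%:P * 'X^(e j - f j)))`_i)@_m
  = (\prod_j ((-1) ^+ f j * ('C(e j, f j))%:R)) * ([multinom (f j : nat) | j < n] == m)%:R
     * ((\sum_j (e j - f j))%N == i)%:R.
Proof.
rewrite big_split /= -rmorph_prod prodrXr coefCM coefXn mulr_natr mcoeffMn.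
rewrite big_split /= mprodXnE sumU.
have -> : \prod_(i0 < n) ((-1) ^+ f i0 * ('C(e i0, f i0))%:R : {mpoly R[n]})
   = (\prod_j ((-1) ^+ f j * ('C(e j, f j))%:R))%:MP.
  by rewrite rmorph_prod; apply: eq_bigr => j _; rewrite rmorphM rmorphXn rmorphN1 rmorph_nat.
rewrite mcoeffCM mcoeffX [i == _]eq_sym; case: (_ == i); case: (_ == m); rewrite /= ?mulr1n ?mulr0n ?mulr1 ?mulr0 ?mul1r ?mul0r ?mulr0 //.
Qed.

Lemma coef_prod (R : comNzRingType) n (e : 'I_n -> nat) (i : nat) (m : 'X_{1..n}) :
 ((\prod_(j < n) ('X - ('X_j : {mpoly R[n]})%:P) ^+ e j)`_i)@_m =
 \prod_j ((-1) ^+ m j * ('C(e j, m j))%:R) * ((\sum_j (e j - m j))%N == i)%:R.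
Proof.
set E := (\sum_j e j)%N.
have leE j : (e j <= E)%N by rewrite /E (bigD1 j) //= leq_addr.
rewrite (eq_bigr _ (fun j _ => @Xsub_expE _ _ _ _ (leE j))) bigA_distr_bigA /=.
rewrite coef_sum (big_morph (mcoeff m) (mcoeffD m) (mcoeff0 _ m)).
under eq_bigr do rewrite term_coef.
have [allm | ] := boolP [forall j, m j <= E]%N.
  pose fm : {ffun 'I_n -> 'I_E.+1} := [ffun j => inord (m j)].
  have fmE j : (fm j : nat) = m j by rewrite ffunE inordK // ltnS; exact: (forallP allm).
  rewrite (bigD1 fm) //= [X in _ + X]big1 ?addr0.
    have -> : [multinom (fm j : nat) | j < n] = m by apply/mnmP => j; rewrite mnmE fmE.
    rewrite eqxx mulr1; congr (_ * _); last by under eq_bigr do rewrite fmE.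
    by apply: eq_bigr => j _; rewrite fmE.
  move=> f nf; case: eqP => [hm|]; last by rewrite mulr0 mul0r.
  exfalso; move/eqP: nf; apply; apply/ffunP => j; apply: val_inj.
  by rewrite /= fmE -hm mnmE.
rewrite negb_forall => /existsP [j]; rewrite -ltnNge => hj.
rewrite (bigD1 j) //= bin_small ?mulr0 ?mul0r ?big1 //; last exact: leq_ltn_trans (leE j) hj.
move=> f _; case: eqP => [hm|]; last by rewrite mulr0 mul0r.
by move: hj; rewrite -hm mnmE ltnNge -ltnS ltn_ord.
Qed.

Lemma Phi_eq n p r (k : 'I_n) : @Phi_div n p r k =
  \prod_(j < n) ('X - ('X_j : {mpoly int[n]})%:P) ^+ (if j == k then (Mr p r).-1 else Mr p r).
Proof.
rewrite /Phi_div [in RHS](bigD1 k) //= eqxx; congr (_ * _).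
by apply: eq_bigr => j /negbTE ->.
Qed.

Lemma sum_subn n (e m : 'I_n -> nat) : (forall j, m j <= e j)%N ->
  (\sum_j (e j - m j) = \sum_j e j - \sum_j m j)%N.
Proof.
move=> h; apply/eqP; rewrite -(eqn_add2r (\sum_j m j)) subnK; last by apply: leq_sum => j _.
by rewrite -big_split /=; apply/eqP; apply: eq_bigr => j _; rewrite subnK.
Qed.

Theorem lemma7p2 (p g s l : nat) :
  prime p -> odd p -> (1 <= g)%N -> (2 * g + 1 < p)%N ->
  (1 <= s)%N -> (1 <= l)%N -> (l <= g)%N ->
  let n := (2 * g + 1)%N in
  let M := Mr p s in
  let delta : int := ((n * M)%:Z - (l * p ^ s)%:Z)%R in
  is_leading_term (@Ivec n p s l)
    (fun k : 'I_n =>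
       (-1 : rat) ^ delta * ('C(M, l))%:R *
       (if (k < 2 * g - 2 * l)%N then 0
        else if k == (2 * g - 2 * l)%N :> nat then (l%:R / M%:R : rat)
        else 1))
    [multinom (if (i < 2 * g - 2 * l)%N then M
               else if i == (2 * g - 2 * l)%N :> nat then (M - l)%N
               else 0%N) | i < n].
Proof.
move=> hp hodd hg hgp hs hl1 hlg n M delta.
have hP : (p ^ s = 2 * M + 1)%N.
  have : odd (p ^ s)%N by rewrite ssrnat.oddX hodd orbT.
  rewrite /M /Mr => h; have h2 : ((p ^ s) %% 2 = 1)%N by rewrite modn2 h.
  have := divn_eq (p ^ s).-1 2; have := divn_eq (p ^ s) 2; move: h2; clear; move: (p ^ s)%N => P; lia.
have hMg : (g < M)%N.
  have : (p ^ 1 <= p ^ s)%N by apply: leq_pexp2l => //; exact: prime_gt0.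
  rewrite expn1.
  move: hP; rewrite /M /Mr => hP.
  have := divn_eq p 2; have : (p %% 2 = 1)%N by rewrite modn2 hodd.
  move: hP hgp; clear; move: (p ^ s)%N ((p ^ s).-1 %/ 2)%N => P Q; lia.
set A := (2 * g - 2 * l)%N.
have hAn : (A < n)%N by rewrite /A /n; lia.
set d := [multinom _ | i < n].
have dE (j : 'I_n) : d j = (if (j < A)%N then M else if j == A :> nat then (M - l)%N else 0%N).
  by rewrite mnmE.
pose e (k j : 'I_n) := if j == k then M.-1 else M.
have coefE k m : (@Ivec n p s l k)@_m = \prod_j ((-1) ^+ m j * ('C(e k j, m j))%:R)
      * ((\sum_j (e k j - m j))%N == (l * p ^ s).-1)%:R.
  by rewrite /Ivec /Pvec Phi_eq coef_prod.
have sume k : (\sum_j e k j = n * M - 1)%N.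
  rewrite (bigD1 k) //= /e eqxx.
  rewrite (eq_bigr (fun _ => M)); last by move=> j /negbTE ->.
  rewrite sum_nat_const cardC1 card_ord /n.
  move: hMg; clear; lia.
have sumd : (\sum_j d j = A * M + (M - l))%N.
  under eq_bigr do rewrite dE.
  rewrite -(big_mkord xpredT (fun j => if (j < A)%N then M else if j == A then (M - l)%N else 0%N)).
  rewrite (@big_cat_nat _ _ _ A) //=; last exact: ltnW.
  rewrite (@big_cat_nat _ _ _ A.+1 A) //= big_nat1 ltnn eqxx.
  rewrite [X in (_ + (_ + X))%N]big1_seq ?addn0; last first.
    move=> j /andP [_]; rewrite mem_index_iota => /andP [hj _].
    by rewrite ltnNge ltnW //= gtn_eqF.
  rewrite (eq_big_nat _ _ (F2 := fun _ => M)); last by move=> j /andP [_ ->].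
  by rewrite sum_nat_const_nat subn0.
have eleM k j : (e k j <= M)%N by rewrite /e; case: (j == k) => //; exact: leq_pred.
have hnum : (n * M - 1 - (A * M + (M - l)) = (l * p ^ s).-1)%N.
  rewrite hP /n /A; move: hMg hlg hl1 hg; clear; move: M => M; nia.
have hlP : (2 <= l * p ^ s)%N.
  rewrite hP; move: hMg hl1; clear; move: M => M; nia.
have hdelta : delta = (A * M + (M - l))%N :> int.
  rewrite /delta; apply/eqP; rewrite subr_eq -PoszD; apply/eqP; congr Posz.
  by move: hnum hlP; clear; move: (n * M)%N (A * M + (M - l))%N (l * p ^ s)%N => a b c; lia.
have hM0 : (0 < M)%N by move: hMg; clear; lia.
split.
  have hk : (2 * g < n)%N by rewrite /n; lia.
  exists (Ordinal hk) => /=.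
  rewrite ifN; last by rewrite -leqNgt /A; lia.
  rewrite ifN; last by apply/eqP; rewrite /A; lia.
  rewrite mulr1 mulf_neq0 // ?expfz_neq0 ?oppr_eq0 ?oner_eq0 // pnatr_eq0 -lt0n bin_gt0.
  by move: hMg hlg; clear; lia.
split.
  move=> k; rewrite coefE.
  case: (ltnP k A) => hkA.
    rewrite (bigD1 k) //= bin_small; last by rewrite /e eqxx dE hkA; move: hM0; clear; lia.
    by rewrite !mulr0 !mul0r rmorph0.
  have hle j : (d j <= e k j)%N.
    rewrite dE /e; case: (ltnP j A) => hj.
      by rewrite ifN //; apply/eqP => hjk; move: hj; rewrite hjk ltnNge hkA.
    case: (j == A :> nat) => //; case: (j == k) => //; move: hl1; clear; lia.
  rewrite sum_subn // sume sumd hnum eqxx mulr1.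
  rewrite big_split /= prodrXr sumd.
  pose a0 : 'I_n := Ordinal hAn.
  rewrite (bigD1 a0) //= big1 ?mulr1; last first.
    move=> j hj; rewrite dE /e.
    have hjA : (j == A :> nat) = false by apply: contraNF hj => /eqP h; apply/eqP/val_inj.
    case: (ltnP j A) => hj'; last by rewrite hjA bin0.
    by rewrite ifN ?binn //; apply/eqP => hjk; move: hj'; rewrite hjk ltnNge hkA.
  rewrite dE ltnn eqxx hdelta -exprnP /=.
  rewrite intrM rmorphXn rmorphN1 rmorph_nat /e.
  case: (ltngtP k A) => hk //; [by move: hkA; rewrite leqNgt hk| |].
    rewrite ifN; last by apply/eqP => h; move: hk; rewrite -h ltnn.
    by rewrite bin_sub ?mulr1 //; move: hMg hlg; clear; lia.
  rewrite ifT; last by apply/eqP/val_inj.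
  have hb : (M * 'C(M.-1, M - l) = l * 'C(M, l))%N.
    rewrite (_ : (M - l = M.-1 - l.-1)%N); last by move: hMg hlg hl1; clear; lia.
    rewrite bin_sub; last by move: hMg hlg hl1; clear; lia.
    by rewrite mul_bin_diag prednK.
  have hMr : (M%:R : rat) != 0 by rewrite pnatr_eq0 -lt0n.
  rewrite -mulrA; congr (_ * _).
  apply: (mulfI hMr); rewrite -natrM hb natrM; field.
  exact: hMr.
move=> m k [i0 [heq hlt]]; rewrite coefE.
have [hle|] := boolP [forall j, m j <= e k j]%N; last first.
  rewrite negb_forall => /existsP [j]; rewrite -ltnNge => hj.
  by rewrite (bigD1 j) //= bin_small // mulr0 mul0r mul0r.
have hle' j : (m j <= e k j)%N by exact: (forallP hle).
case: eqP => hs0; last by rewrite mulr0.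
exfalso; move: hs0; rewrite sum_subn // sume => hs0.
have hSe : (\sum_j m j <= n * M - 1)%N by rewrite -(sume k); apply: leq_sum => j _.
have hsm : (\sum_j m j = A * M + (M - l))%N.
  move: hs0 hnum hSe hlP; clear; move: (\sum_j m j) (n * M)%N (A * M + (M - l))%N (l * p ^ s)%N.
  move=> a b c q; lia.
case: (ltnP i0 A) => hiA.
  by move: hlt; rewrite dE hiA ltnNge (leq_trans (hle' i0) (eleM k i0)).
have : (\sum_j d j < \sum_j m j)%N.
  rewrite [X in (X < _)%N](bigD1 i0) // [X in (_ < X)%N](bigD1 i0) //=.
  have : (\sum_(j | j != i0) d j <= \sum_(j | j != i0) m j)%N.
    apply: leq_sum => j hj; case: (ltnP j i0) => hji; first by rewrite heq.
    have hji' : (i0 < j)%N by rewrite ltn_neqAle eq_sym hji andbT; apply: contra hj => /eqP h; apply/eqP/val_inj.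
    by rewrite dE ltnNge (leq_trans hiA (ltnW hji')) /= gtn_eqF // (leq_ltn_trans hiA hji').
  by move=> h2; rewrite -addSn; apply: leq_add.
by rewrite sumd hsm ltnn.
Qed.
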